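(* Let $\mathcal{C}=\{C_1,\dots,C_k\}\subset\mathbb{P}^2_{\mathbb{C}}$ be a $d$-arrangement of $k\geq 3$ curves with $t_k=0$. Then the Levi graph $G$ of $\mathcal{C}$ contains an induced cycle of length $6$.
   Context: A $d$-arrangement is an arrangement $\mathcal{C}=\{C_1,\dots,C_k\}$ of $k\geq 3$ smooth plane curves all of the same degree $d\geq 1$ such that the singular locus $\mathrm{Sing}(\mathcal{C})$ consists only of ordinary intersection points (locally like intersections of lines). For $r\geq 2$, $t_r$ denotes the number of points of $\mathrm{Sing}(\mathcal{C})$ lying on exactly $r$ curves of $\mathcal{C}$; thus $t_k=0$ means no point lies on all $k$ curves. The Levi graph of $\mathcal{C}$ is the bipartite graph with one vertex for each point $p\in\mathrm{Sing}(\mathcal{C})$, one vertex for each curve $C_j$, and an edge between the vertex of $p$ and the vertex of $C_j$ iff $p\in C_j$. *)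

(* Defs.v *)
(* complex numbers = R[i] (real_closed) over an abstract
   R : realType (any realType is the field of real numbers up to isomorphism);
   plane curves = homogeneous polynomials in {mpoly C[3]} (multinomials). *)
From HB Require Import structures.
From mathcomp Require Import all_boot all_order all_algebra.
From mathcomp Require Import reals.
From mathcomp.real_closed Require Import complex.
From mathcomp.multinomials Require Import mpoly.

Set Implicit Arguments.
Unset Strict Implicit.
Unset Printing Implicit Defensive.
Import GRing.Theory.
Local Open Scope ring_scope.

Section Arrangements.
Variable C : fieldType.

(* Points of P^2(C) are represented by nonzero homogeneous coordinate vectors;
   two such vectors represent the same point iff they are proportional. *)
Definition nonzero_pt (v : 'I_3 -> C) : Prop := exists i, v i != 0.

Definition proj_eq (v w : 'I_3 -> C) : Prop :=
  exists c : C, forall i, w i = c * v i.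

Definition on_curve (F : {mpoly C[3]}) (v : 'I_3 -> C) : Prop := F.@[v] = 0.

Definition grad (F : {mpoly C[3]}) (v : 'I_3 -> C) : 'I_3 -> C :=
  fun i => (mderiv i F).@[v].

Definition smooth_curve (d : nat) (F : {mpoly C[3]}) : Prop :=
  [/\ F \is d.-homog, F != 0 &
      forall v, nonzero_pt v -> exists i, grad F v i != 0].

Definition transversal_at (F G : {mpoly C[3]}) (v : 'I_3 -> C) : Prop :=
  ~ (exists c : C, forall i, grad F v i = c * grad G v i).

Variables (k : nat) (F : 'I_k -> {mpoly C[3]}).

(* a d-arrangement of k >= 3 distinct smooth curves of degree d >= 1 whose
   singular locus consists of ordinary intersection points (the curves
   through any singular point have pairwise distinct tangents) *)
Definition d_arrangement (d : nat) : Prop :=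
  [/\ (3 <= k)%N, (1 <= d)%N,
      forall j, smooth_curve d (F j),
      forall i j, i != j ->
        ~ (forall v, nonzero_pt v -> (on_curve (F i) v <-> on_curve (F j) v)) &
      forall i j v, i != j -> nonzero_pt v ->
        on_curve (F i) v -> on_curve (F j) v -> transversal_at (F i) (F j) v].

(* t_k = 0 : no point lies on all k curves *)
Definition tk_zero : Prop :=
  ~ (exists v, nonzero_pt v /\ forall j, on_curve (F j) v).

Definition in_sing (v : 'I_3 -> C) : Prop :=
  nonzero_pt v /\ exists i j, i != j /\ on_curve (F i) v /\ on_curve (F j) v.

Inductive levi_vertex : Type :=
  | LPoint of ('I_3 -> C)
  | LCurve of 'I_k.

Definition levi_vertex_ok (x : levi_vertex) : Prop :=
  match x with LPoint v => in_sing v | LCurve _ => True end.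

Definition levi_same (x y : levi_vertex) : Prop :=
  match x, y with
  | LPoint v, LPoint w => proj_eq v w
  | LCurve i, LCurve j => i = j
  | _, _ => False
  end.

Definition levi_adj (x y : levi_vertex) : Prop :=
  match x, y with
  | LPoint v, LCurve j => on_curve (F j) v
  | LCurve j, LPoint v => on_curve (F j) v
  | _, _ => False
  end.

Definition levi_induced_cycle (n : nat) (x : 'I_n -> levi_vertex) : Prop :=
  [/\ (3 <= n)%N,
      forall i, levi_vertex_ok (x i),
      forall i j, i != j -> ~ levi_same (x i) (x j) &
      forall i j : 'I_n, levi_adj (x i) (x j) <->
        ((val j == (val i).+1 %% n)%N \/ (val i == (val j).+1 %% n)%N)].

Definition levi_has_induced_cycle (n : nat) : Prop :=
  exists x : 'I_n -> levi_vertex, levi_induced_cycle x.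

End Arrangements.

(* Main.v *)
Require Import Defs.
From HB Require Import structures.
From mathcomp Require Import all_boot all_order all_algebra.
From mathcomp Require Import reals.
From mathcomp.real_closed Require Import complex.
From mathcomp.multinomials Require Import mpoly.
From Stdlib Require Import Classical FunctionalExtensionality.
From mathcomp Require Import zify.
From mathcomp Require Import ring.

Set Implicit Arguments.
Unset Strict Implicit.
Unset Printing Implicit Defensive.
Import GRing.Theory Num.Theory.
Local Open Scope ring_scope.

Section Poly.
Variable C : numClosedFieldType.

Lemma poly_eq_ev (p q : {poly C}) :
  (forall x, x != 0 -> p.[x] = q.[x]) -> p = q.
Proof.
move=> H; apply/eqP; rewrite -subr_eq0; apply/negPn/negP => nz.
have nz' : (p - q) * 'X != 0 by rewrite mulf_neq0 // polyX_eq0.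
have [x] := closed_nonrootP _ nz'.
rewrite /root hornerM hornerX hornerD hornerN mulf_eq0 negb_or => /andP[h1 h2].
by move: h1; rewrite (H x h2) subrr eqxx.
Qed.

Lemma mmap_rmorph (S S' : comNzRingType) (g : {rmorphism S -> S'}) n
   (f : C -> S) (h : 'I_n -> S) (p : {mpoly C[n]}) :
  g (mmap f h p) = mmap (g \o f) (g \o h) p.
Proof.
rewrite /mmap rmorph_sum; apply: eq_bigr => m _.
by rewrite rmorphM /mmap1 rmorph_prod; congr (_ * _); apply: eq_bigr => i _;
  rewrite rmorphXn.
Qed.

Lemma mmap_ext (S : comNzRingType) n (f1 f2 : C -> S) (h1 h2 : 'I_n -> S) p :
  f1 =1 f2 -> h1 =1 h2 -> mmap f1 h1 p = mmap f2 h2 p.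
Proof.
move=> ef eh; rewrite /mmap; apply: eq_bigr => m _.
by rewrite ef (mmap1_eq _ eh).
Qed.

Lemma homog_deg n (F : {mpoly C[n]}) d m :
  F \is d.-homog -> m \in msupp F -> (\sum_i m i)%N = d.
Proof. by move=> hF hm; rewrite -mdegE; exact: (dhomog_mf hF hm). Qed.

Lemma meval_scale n (F : {mpoly C[n]}) d (v : 'I_n -> C) (c : C) :
  F \is d.-homog -> F.@[fun i => c * v i] = c ^+ d * F.@[v].
Proof.
move=> hF; rewrite !mevalE mulr_sumr; apply: eq_big_seq => m hm.
rewrite mulrCA; congr (_ * _).
rewrite (eq_bigr (fun i => c ^+ m i * v i ^+ m i)); last by move=> i _; rewrite exprMn.
by rewrite big_split /= prodrXr (homog_deg hF hm).
Qed.

Lemma coef_top_mul (S : comNzRingType) (A B : {poly S}) a b :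
  (size A <= a.+1)%N -> (size B <= b.+1)%N -> (A * B)`_(a + b) = A`_a * B`_b.
Proof.
move=> hA hB; rewrite coefM.
have ha : (a < (a + b).+1)%N by rewrite ltnS leq_addr.
rewrite (bigD1 (Ordinal ha)) //= big1 ?addr0 ?addKn // => j hj.
have : (val j != a) by apply: contra hj => /eqP hj'; apply/eqP/val_inj.
rewrite neq_ltn => /orP[lt|gt].
  rewrite [B`__]nth_default ?mulr0 //; apply: leq_trans hB _.
  move: lt; case: j {hj} => j /= _; lia.
by rewrite [A`__]nth_default ?mul0r //; apply: leq_trans hA _.
Qed.

Lemma top_coef_prod (S : comNzRingType) (I : Type) (r : seq I)
  (P : I -> {poly S}) (dg : I -> nat) (lc : I -> S) :
  (forall i, (size (P i) <= (dg i).+1)%N /\ (P i)`_(dg i) = lc i) ->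
  (size (\prod_(i <- r) P i)%R <= (\sum_(i <- r) dg i).+1)%N /\
  (\prod_(i <- r) P i)`_(\sum_(i <- r) dg i) = \prod_(i <- r) lc i.
Proof.
move=> hP; elim: r => [|a r [IHs IHc]].
  by rewrite !big_nil size_poly1 coefC.
rewrite !big_cons; have [hs hc] := hP a; split.
  apply: leq_trans (size_polyMleq _ _) _.
  move: hs IHs; set x := size _; set y := size _; lia.
by rewrite coef_top_mul // hc IHc.
Qed.

Lemma lin_pow (S : comNzRingType) (c g : S) k :
  (size ((((c%:P + g%:P * 'X) : {poly S}) ^+ k))%R <= k.+1)%N /\
  (((c%:P + g%:P * 'X) : {poly S}) ^+ k)`_k = g ^+ k.
Proof.
have hs : (size ((c%:P + g%:P * 'X) : {poly S})%R <= 2)%N.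
  apply: leq_trans (size_polyD _ _) _; rewrite geq_max size_polyC; apply/andP; split; first by case: (c == 0).
  by rewrite mulrC; case: (eqVneq g 0) => [->|hg]; rewrite ?polyC0 ?mulr0 ?size_poly0 // size_XmulC.

have hc : ((c%:P + g%:P * 'X) : {poly S})`_1 = g.
  by rewrite coefD coefC coefMX /= add0r coefC.
elim: k => [|k [IHs IHc]]; first by rewrite !expr0 size_poly1 coefC.
rewrite exprS; split.
  apply: leq_trans (size_polyMleq _ _) _; move: hs IHs.
  set x := size _; set y := size _; lia.
by rewrite -add1n coef_top_mul // hc IHc exprS.
Qed.

Lemma mmap_lin (S : comNzRingType) n (F : {mpoly C[n]}) d (f : C -> S)
  (c g : 'I_n -> S) :
  F \is d.-homog ->
  (size (mmap (polyC \o f) (fun i => (c i)%:P + (g i)%:P * 'X) F)%R <= d.+1)%N /\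
  (mmap (polyC \o f) (fun i => (c i)%:P + (g i)%:P * 'X) F)`_d = mmap f g F.
Proof.
move=> hF.
have hm : forall m, m \in msupp F ->
  (size (mmap1 (fun i => (c i)%:P + (g i)%:P * 'X) m)%R <= d.+1)%N /\
  (mmap1 (fun i => (c i)%:P + (g i)%:P * 'X) m)`_d = mmap1 g m.
  move=> m hm; rewrite /mmap1 -(homog_deg hF hm).
  exact: (top_coef_prod _ (fun i => lin_pow (c i) (g i) (m i))).
split.
  rewrite /mmap big_seq; apply: (big_ind (fun p : {poly S} => (size p <= d.+1)%N)).
  - by rewrite size_poly0.
  - by move=> x y hx hy; apply: leq_trans (size_polyD _ _) _; rewrite geq_max hx hy.
  move=> m hmm; apply: leq_trans (size_polyMleq _ _) _.
  have [h1 _] := hm m hmm; move: h1; rewrite /= size_polyC.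
  set x := size _; case: (f _ == 0) => /=; lia.
rewrite /mmap coef_sum; apply: eq_big_seq => m hmm.
by rewrite /= coefCM (proj2 (hm m hmm)).
Qed.

Definition Syl (R : nzRingType) (n m : nat) (p q : {poly R}) : 'M[R]_(m + n) :=
  \matrix_(i, j) match split i with
                 | inl k => p`_(j - k) *+ (k <= j)%N
                 | inr k => q`_(j - k) *+ (k <= j)%N end.

Lemma resE (R : nzRingType) (p q : {poly R}) :
  resultant p q = \det (Syl (size p).-1 (size q).-1 p q).
Proof.
rewrite /resultant; congr (\det _); apply/matrixP => i j.
by rewrite Sylvester_mxE mxE.
Qed.

Definition sidx m n (i : 'I_(m + n)) : nat :=
  match split i with inl k => nat_of_ord k | inr k => nat_of_ord k end.

Lemma split_l m n (i : 'I_m) : split (lshift n i) = inl i.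
Proof. exact: (unsplitK (inl _ i)). Qed.
Lemma split_r m n (i : 'I_n) : split (rshift m i) = inr i.
Proof. exact: (unsplitK (inr _ i)). Qed.

Definition scl (l : C) d (p : {poly C}) := \poly_(i < d.+1) (l ^+ (d - i) * p`_i).

Lemma size_scl l d (p : {poly C}) : size p = d.+1 -> size (scl l d p) = d.+1.
Proof.
move=> sp; rewrite size_poly_eq //= subnn expr0 mul1r.
have : p != 0 by rewrite -size_poly_eq0 sp.
by rewrite -lead_coef_eq0 /lead_coef sp.
Qed.

Lemma res_scale (p q : {poly C}) d (l : C) : l != 0 ->
  size p = d.+1 -> size q = d.+1 ->
  resultant (scl l d p) (scl l d q) = l ^+ (d * d) * resultant p q.
Proof.
move=> l0 sp sq.
rewrite !resE (size_scl l sp) (size_scl l sq) sp sq /=.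
have key : Syl d d (scl l d p) (scl l d q) *m diag_mx (\row_(j < d + d) l ^+ j)
   = diag_mx (\row_(i < d + d) l ^+ (d + sidx i)) *m Syl d d p q.
  apply/matrixP => i j; rewrite mul_mx_diag mul_diag_mx !mxE /sidx.
  case: (split i) => k; (case: (leqP k j) => hkj; last by rewrite !mulr0n mul0r mulr0);
    rewrite !mulr1n coef_poly; (case: (ltnP (j - k) d.+1) => hjk);
    [ by rewrite mulrC mulrA -exprD; congr (l ^+ _ * _); lia
    | by rewrite mul0r nth_default ?mulr0 // ?sp ?sq
    | by rewrite mulrC mulrA -exprD; congr (l ^+ _ * _); lia
    | by rewrite mul0r nth_default ?mulr0 // ?sp ?sq ].
set A := \prod_(i < d) l ^+ i.
have P1 : \prod_(j < d + d) (\row_(j < d + d) l ^+ j) 0 j = A * (l ^+ (d * d) * A).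
  rewrite big_split_ord /=; congr (_ * _); first by apply: eq_bigr => i _; rewrite mxE.
  rewrite (eq_bigr (fun i : 'I_d => l ^+ d * l ^+ i)); last by move=> i _; rewrite mxE /= exprD.
  by rewrite big_split /= prodr_const card_ord -exprM.
have P2 : \prod_(j < d + d) (\row_(i < d + d) l ^+ (d + sidx i)) 0 j
    = (l ^+ (d * d) * A) * (l ^+ (d * d) * A).
  rewrite big_split_ord /=; congr (_ * _).
    rewrite (eq_bigr (fun i : 'I_d => l ^+ d * l ^+ i)); last first.
      by move=> i _; rewrite mxE /sidx split_l exprD.
    by rewrite big_split /= prodr_const card_ord -exprM.
  rewrite (eq_bigr (fun i : 'I_d => l ^+ d * l ^+ i)); last first.
    by move=> i _; rewrite mxE /sidx split_r exprD.
  by rewrite big_split /= prodr_const card_ord -exprM.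
have := congr1 determinant key; rewrite !det_mulmx !det_diag P1 P2 => h.
have hA : A != 0 by rewrite /A prodf_seq_neq0; apply/allP => i _; exact: expf_neq0.
apply: (mulIf (_ : A * (l ^+ (d * d) * A) != 0)).
  by rewrite !mulf_neq0 ?expf_neq0.
by rewrite h; ring.
Qed.

Lemma common_root (p q : {poly C}) :
  resultant p q = 0 -> exists t, p.[t] = 0 /\ q.[t] = 0.
Proof.
move/eqP; rewrite resultant_eq0 => h.
have [x hx] : exists x, root (gcdp p q) x.
  by apply/closed_rootP; rewrite neq_ltn h orbT.
by move: hx; rewrite root_gcd => /andP[/eqP h1 /eqP h2]; exists x.
Qed.

Definition pu (F : {mpoly C[3]}) (u e : 'I_3 -> C) : {poly C} :=
  mmap (polyC \o (@idfun C)) (fun i => (u i)%:P + (e i)%:P * 'X) F.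

Lemma pu_eval F u e t : (pu F u e).[t] = F.@[fun i => u i + e i * t].
Proof.
rewrite -horner_evalE /pu mmap_rmorph /meval; apply: mmap_ext => x /=.
  by rewrite horner_evalE hornerC.
by rewrite horner_evalE hornerD hornerC hornerMX hornerC.
Qed.

Lemma pu_size F d u e : F \is d.-homog -> F.@[e] != 0 ->
  size (pu F u e) = d.+1 /\ lead_coef (pu F u e) = F.@[e].
Proof.
move=> hF ne; have [hs hc] := mmap_lin idfun u e hF.
rewrite -/(pu F u e) in hs hc.
have hd : (d < size (pu F u e))%N.
  rewrite ltnNge; apply/negP => h; move: ne; rewrite -[F.@[e]]/(mmap idfun e F).
  by rewrite -hc nth_default ?eqxx.
have e1 : size (pu F u e) = d.+1 by apply/eqP; rewrite eqn_leq hs hd.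
by split => //; rewrite /lead_coef e1 /= hc.
Qed.

Lemma size_poly_ge_lead d (p : {poly C}) : size p = d.+1 -> p`_d != 0.
Proof.
move=> sp; have : p != 0 by rewrite -size_poly_eq0 sp.
by rewrite -lead_coef_eq0 /lead_coef sp.
Qed.

Lemma pu_scale F d u e l : F \is d.-homog -> F.@[e] != 0 -> l != 0 ->
  pu F (fun i => l * u i) e = scl l d (pu F u e).
Proof.
move=> hF ne l0; have [sp _] := pu_size u hF ne.
apply: poly_eq_ev => t _.
rewrite pu_eval /scl horner_poly.
have -> : F.@[fun i => l * u i + e i * t] = F.@[fun i => l * (u i + e i * (t / l))].
  by apply: meval_eq => i; field.
rewrite (meval_scale _ _ hF) -pu_eval horner_coef sp mulr_sumr; apply: eq_bigr => i _.
have hi : (i <= d)%N by rewrite -ltnS.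
have hl : l ^+ (d - i) = l ^+ d / l ^+ i.
  by apply: (mulIf (expf_neq0 i l0)); rewrite -exprD subnK // divfK ?expf_neq0.
by rewrite hl expr_div_n; field; rewrite expf_neq0.
Qed.

Definition resu F G (e u : 'I_3 -> C) := resultant (pu F u e) (pu G u e).

Lemma resu_scale F G d u e l : F \is d.-homog -> G \is d.-homog ->
  F.@[e] != 0 -> G.@[e] != 0 -> l != 0 ->
  resu F G e (fun i => l * u i) = l ^+ (d * d) * resu F G e u.
Proof.
move=> hF hG nF nG l0; rewrite /resu (pu_scale u hF) // (pu_scale u hG) //.
by rewrite res_scale // ?(proj1 (pu_size _ hF nF)) ?(proj1 (pu_size _ hG nG)).
Qed.

Definition PP (F : {mpoly C[3]}) (a b e : 'I_3 -> C) : {poly {poly C}} :=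
  mmap (polyC \o polyC) (fun i => ((a i)%:P + (b i)%:P * 'X)%:P + ((e i)%:P)%:P * 'X) F.

Lemma PP_size F d a b e : F \is d.-homog -> F.@[e] != 0 ->
  lead_coef (PP F a b e) = (F.@[e])%:P.
Proof.
move=> hF ne.
have [hs hc] := mmap_lin polyC (fun i => (a i)%:P + (b i)%:P * 'X) (fun i => (e i)%:P) hF.
rewrite -/(PP F a b e) in hs hc.
have hc' : (PP F a b e)`_d = (F.@[e])%:P.
  rewrite hc /meval -[RHS]/(polyC (mmap idfun e F)) mmap_rmorph.
  by apply: mmap_ext.
have hd : (d < size (PP F a b e))%N.
  rewrite ltnNge; apply/negP => h; move: ne; rewrite -polyC_eq0 -hc'.
  by rewrite nth_default ?eqxx.
have e1 : size (PP F a b e) = d.+1 by apply/eqP; rewrite eqn_leq hs hd.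
by rewrite /lead_coef e1 /= hc'.
Qed.

Lemma PP_eval F a b e s :
  map_poly (horner_eval s) (PP F a b e) = pu F (fun i => a i + b i * s) e.
Proof.
rewrite /PP mmap_rmorph /pu; apply: mmap_ext => x /=.
  by rewrite map_polyC /= horner_evalE hornerC.
rewrite rmorphD rmorphM /= !map_polyC map_polyX /= !horner_evalE hornerC.
by rewrite hornerD hornerMX !hornerC.
Qed.

Lemma PP_res F G d a b e s : F \is d.-homog -> G \is d.-homog ->
  F.@[e] != 0 -> G.@[e] != 0 ->
  (resultant (PP F a b e) (PP G a b e)).[s] = resu F G e (fun i => a i + b i * s).
Proof.
move=> hF hG nF nG.
rewrite -horner_evalE map_resultant ?PP_eval //.
  by rewrite (@PP_size F d a b e hF nF) /= horner_evalE hornerC.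
by rewrite (@PP_size G d a b e hG nG) /= horner_evalE hornerC.
Qed.

Lemma nz_lin (u e : 'I_3 -> C) j t : u j = 1 -> u (inord 2) = 0 ->
  e (inord 2) != 0 -> nonzero_pt (fun i => u i + e i * t).
Proof.
move=> h1 h2 h3; case: (eqVneq t 0) => [->|t0].
  by exists j; rewrite mulr0 addr0 h1 oner_eq0.
by exists (inord 2); rewrite h2 add0r mulf_neq0.
Qed.

Lemma meet (F G : {mpoly C[3]}) d (e : 'I_3 -> C) : (0 < d)%N ->
  F \is d.-homog -> G \is d.-homog ->
  F.@[e] != 0 -> G.@[e] != 0 -> e (inord 2) != 0 ->
  exists v, nonzero_pt v /\ F.@[v] = 0 /\ G.@[v] = 0.
Proof.
move=> d0 hF hG nF nG e2.
pose a : 'I_3 -> C := fun i => (nat_of_ord i == 0)%N%:R.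
pose b : 'I_3 -> C := fun i => (nat_of_ord i == 1)%N%:R.
have a2 : a (inord 2) = 0 by rewrite /a inordK.
have b2 : b (inord 2) = 0 by rewrite /b inordK.
have a0 : a (inord 0) = 1 by rewrite /a inordK.
have b1 : b (inord 1) = 1 by rewrite /b inordK.
have a1 : a (inord 1) = 0 by rewrite /a inordK.
have b0 : b (inord 0) = 0 by rewrite /b inordK.
set r := resultant (PP F a b e) (PP G a b e).
have hr s : r.[s] = resu F G e (fun i => a i + b i * s) by rewrite (PP_res _ _ _ hF hG nF nG).
case: (classic (exists s, r.[s] = 0)) => [[s hs] | hno].
  rewrite hr in hs; have [t [h1 h2]] := common_root hs.
  exists (fun i => (a i + b i * s) + e i * t); split.
    by apply: (@nz_lin _ _ (inord 0)); rewrite ?a0 ?b0 ?a2 ?b2 ?mul0r ?addr0.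
  by rewrite -!pu_eval.
have : size r == 1.
  apply/negPn/negP => /closed_rootP [s hs]; apply: hno; exists s; exact/eqP.
case/size_poly1P => c c0 rc.
set r' := resultant (PP F b a e) (PP G b a e).
have hr' : r' = c *: 'X^(d * d).
  apply: poly_eq_ev => mu mu0.
  rewrite (PP_res _ _ _ hF hG nF nG) // hornerZ hornerXn.
  have -> : (fun i => b i + a i * mu) = (fun i => mu * (a i + b i * mu^-1)).
    by apply: functional_extensionality => i; field.
  by rewrite (resu_scale _ hF hG nF nG mu0) -hr rc hornerC mulrC.
have : r'.[0] = 0.
  rewrite hr' hornerZ hornerXn expr0n; case: d d0 {hF hG r' hr'} => // n _; by rewrite mulr0.
rewrite (PP_res _ _ _ hF hG nF nG) // => h0; have [t [h1 h2]] := common_root h0.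
exists (fun i => (b i + a i * 0) + e i * t); split.
  by apply: (@nz_lin _ _ (inord 1)); rewrite ?a1 ?b1 ?a2 ?b2 ?mul0r ?mulr0 ?addr0.
by rewrite -!pu_eval.
Qed.

Lemma big3 (T : Type) (idx : T) (op : Monoid.law idx) (f : 'I_3 -> T) :
  \big[op/idx]_i f i = op (op (f (inord 0)) (f (inord 1))) (f (inord 2)).
Proof.
rewrite !big_ord_recl big_ord0 Monoid.mulm1 Monoid.mulmA.
by congr (op (op (f _) (f _)) (f _)); apply/val_inj; rewrite /= inordK.
Qed.

Lemma ord3 (i : 'I_3) : [\/ i = inord 0, i = inord 1 | i = inord 2].
Proof.
case: i => [[|[|[|i]]] hi] //.
- by constructor 1; apply/val_inj; rewrite /= inordK.
- by constructor 2; apply/val_inj; rewrite /= inordK.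
- by constructor 3; apply/val_inj; rewrite /= inordK.
Qed.

Lemma nonroot_homog (H : {mpoly C[3]}) D : H \is D.-homog -> H != 0 ->
  exists v, H.@[v] != 0.
Proof.
move=> hH nH.
pose E (m : 'X_{1..3}) := (m (inord 1) + m (inord 2) * D.+1)%N.
pose P : {poly C} := \sum_(m <- msupp H) H@_m *: 'X^(E m).
pose v (t : C) : 'I_3 -> C :=
  fun i => t ^+ ((nat_of_ord i == 1)%N + (nat_of_ord i == 2)%N * D.+1)%N.
have hv t : H.@[v t] = P.[t].
  rewrite mevalE /P horner_sum; apply: eq_bigr => m _.
  rewrite hornerZ hornerXn; congr (_ * _).
  rewrite big3 /v !inordK //= -!exprM -!exprD /E; congr (t ^+ _). by rewrite !mul0n !addn0 !add0n !mul1n mulnC.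
have [m0 hm0] : exists m0, m0 \in msupp H.
  have : msupp H != [::] by rewrite msupp_eq0.
  by case: (msupp H) => [|m0 s] //= _; exists m0; rewrite mem_head.
have inj m : m \in msupp H -> E m = E m0 -> m = m0.
  move=> hm he; have s1 := homog_deg hH hm; have s0 := homog_deg hH hm0.
  rewrite big3 /= in s1; rewrite big3 /= in s0.
  have e1 : m (inord 1) = m0 (inord 1).
    have := congr1 (fun x => x %% D.+1)%N he; rewrite /E /=.
    rewrite ![(_ + _ * D.+1)%N]addnC !modnMDl !modn_small //; lia.
  have e2 : m (inord 2) = m0 (inord 2).
    move: he; rewrite /E e1 => /eqP; rewrite eqn_add2l eqn_pmul2r // => /eqP //.
  apply/mnmP => i; case: (ord3 i) => ->; lia.
have Pc : P`_(E m0) = H@_m0.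
  rewrite /P coef_sum (bigD1_seq m0) ?msupp_uniq //= coefZ coefXn eqxx mulr1.
  rewrite big1_seq ?addr0 // => m /andP[ne hm].
  rewrite coefZ coefXn; case: eqP => [he|]; last by rewrite mulr0.
  by move: ne; rewrite (inj m hm (esym he)) eqxx.
have P0 : P != 0.
  apply/eqP => P0; move: Pc; rewrite P0 coef0 => /esym/eqP.
  by rewrite mcoeff_eq0 hm0.
have [t ht] := closed_nonrootP _ P0.
by exists (v t); rewrite hv.
Qed.

Lemma exists_e (F G : {mpoly C[3]}) d : F \is d.-homog -> G \is d.-homog ->
  F != 0 -> G != 0 ->
  exists e, [/\ F.@[e] != 0, G.@[e] != 0 & e (inord 2) != 0].
Proof.
move=> hF hG nF nG.
have hX : ('X_(inord 2) : {mpoly C[3]}) \is 1.-homog by rewrite dhomogX /= mdeg1.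
have nX : ('X_(inord 2) : {mpoly C[3]}) != 0.
  apply/eqP => h; have := @mcoeffX 3 C (U_(inord 2))%MM (U_(inord 2))%MM.
  by rewrite h mcoeff0 eqxx => /esym/eqP; rewrite oner_eq0.
have hH := dhomogM (dhomogM hF hG) hX.
have [v hv] := nonroot_homog hH (mulf_neq0 (mulf_neq0 nF nG) nX).
move: hv; rewrite !mevalM mevalXU !mulf_eq0 !negb_or => /andP[/andP[h1 h2] h3].
by exists v.
Qed.

Lemma proj_on (F : {mpoly C[3]}) d v w : F \is d.-homog ->
  proj_eq v w -> F.@[v] = 0 -> F.@[w] = 0.
Proof.
move=> hF [c hc] h0.
have -> : F.@[w] = F.@[fun i => c * v i] by apply: meval_eq.
by rewrite (meval_scale _ _ hF) h0 mulr0.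
Qed.
End Poly.

From Stdlib Require Import ClassicalEpsilon.

Definition pb (P : Prop) : bool :=
  if excluded_middle_informative P then true else false.
Lemma pbP (P : Prop) : reflect P (pb P).
Proof. by rewrite /pb; case: excluded_middle_informative => h; constructor. Qed.

Lemma ex_max (P : nat -> Prop) N : (exists n, P n) ->
  (forall n, P n -> (n <= N)%N) -> exists n, P n /\ forall m, P m -> (m <= n)%N.
Proof.
elim: N => [|N IH] [n Pn] hb.
  exists n; split => // m Pm; have := hb m Pm; lia.
case: (classic (P N.+1)) => h; first by exists N.+1; split.
apply: IH; first by exists n.
move=> m Pm; have := hb m Pm; rewrite leq_eqVlt => /orP[/eqP e|] //.
by move: Pm; rewrite e.
Qed.

Section Comb.
Variables (C : numClosedFieldType) (k d : nat) (F : 'I_k -> {mpoly C[3]}).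
Hypotheses (hA : d_arrangement F d) (hT : tk_zero F).

Let on j v := on_curve (F j) v.

Lemma homF j : F j \is d.-homog.
Proof. by case: hA => _ _ sm _ _; case: (sm j). Qed.
Lemma nzF j : F j != 0.
Proof. by case: hA => _ _ sm _ _; case: (sm j). Qed.
Lemma d_gt0 : (0 < d)%N.
Proof. by case: hA. Qed.
Lemma k_ge3 : (3 <= k)%N.
Proof. by case: hA. Qed.

Lemma meetF i j : exists v, [/\ nonzero_pt v, on i v & on j v].
Proof.
have [e [h1 h2 h3]] := exists_e (homF i) (homF j) (nzF i) (nzF j).
have [v [nv [hv1 hv2]]] := meet d_gt0 (homF i) (homF j) h1 h2 h3.
by exists v.
Qed.

Lemma projF j v w : proj_eq v w -> on j v -> on j w.
Proof. exact: (proj_on (homF j)). Qed.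

Definition blk v : {set 'I_k} := [set j | (F j).@[v] == 0].
Lemma blkP v j : reflect (on j v) (j \in blk v).
Proof. by rewrite inE; apply: eqP. Qed.


Lemma cycle_of a b c v0 w1 w2 :
  a <> b -> b <> c -> a <> c ->
  nonzero_pt v0 -> on a v0 -> on b v0 -> ~ on c v0 ->
  nonzero_pt w2 -> on b w2 -> on c w2 -> ~ on a w2 ->
  nonzero_pt w1 -> on a w1 -> on c w1 -> ~ on b w1 ->
  levi_has_induced_cycle F 6.
Proof.
move=> ab bc ac n0 a0 b0 c0 n2 b2 c2 a2 n1 a1 c1 b1.
have ba : b <> a by move=> e; apply: ab.
have cb : c <> b by move=> e; apply: bc.
have ca : c <> a by move=> e; apply: ac.
have p02 : ~ proj_eq v0 w2 by move=> /projF h; apply: a2; apply: h.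
have p20 : ~ proj_eq w2 v0 by move=> /projF h; apply: c0; apply: h.
have p01 : ~ proj_eq v0 w1 by move=> /projF h; apply: b1; apply: h.
have p10 : ~ proj_eq w1 v0 by move=> /projF h; apply: c0; apply: h.
have p21 : ~ proj_eq w2 w1 by move=> /projF h; apply: b1; apply: h.
have p12 : ~ proj_eq w1 w2 by move=> /projF h; apply: a2; apply: h.
exists (fun i : 'I_6 => match val i with
  | 0 => @LCurve C k a | 1 => @LPoint C k v0 | 2 => @LCurve C k b | 3 => @LPoint C k w2
  | 4 => @LCurve C k c | _ => @LPoint C k w1 end); split => //.
- move=> [[|[|[|[|[|[|i]]]]]] hi] //=.
  + by split => //; exists a, b; split => //; apply/eqP.
  + by split => //; exists b, c; split => //; apply/eqP.
  + by split => //; exists a, c; split => //; apply/eqP.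
- move=> [[|[|[|[|[|[|i]]]]]] hi] [[|[|[|[|[|[|j]]]]]] hj] //=.
  all: try by move=> _; first [ assumption | case ].
- move=> [[|[|[|[|[|[|i]]]]]] hi] [[|[|[|[|[|[|j]]]]]] hj] //=.
  all: split; [ move=> h; first [ by left | by right | by case: h | contradiction ]
              | case=> h // ].
Qed.


Lemma main_gen : levi_has_induced_cycle F 6.
Proof.
have k3 := k_ge3.
have k0 : (0 < k)%N by lia.
have k1 : (1 < k)%N by lia.
pose P n := exists v, nonzero_pt v /\ #|blk v| = n.
have [n [[v0 [nv0 hv0]] hmax]] : exists n, P n /\ forall m, P m -> (m <= n)%N.
  apply: (ex_max (N := k)).
    have [v [nv _ _]] := meetF (Ordinal k0) (Ordinal k0).
    by exists #|blk v|, v.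
  by move=> m [v [_ <-]]; apply: leq_trans (max_card _) _; rewrite card_ord.
set B0 := blk v0.
have n2 : (2 <= n)%N.
  have [v [nv h0 h1]] := meetF (Ordinal k0) (Ordinal k1).
  apply: leq_trans (hmax _ (ex_intro _ v (conj nv erefl))).
  rewrite (cardsD1 (Ordinal k0)) (cardsD1 (Ordinal k1)).
  rewrite !inE.
  have -> : (F (Ordinal k0)).@[v] == 0 by apply/eqP.
  have -> : (F (Ordinal k1)).@[v] == 0 by apply/eqP.
  have -> : Ordinal k1 != Ordinal k0 by rewrite -val_eqE.
  by [].
have [c hc] : exists c, c \notin B0.
  apply: NNPP => hn; apply: hT; exists v0; split => // j.
  apply/blkP; apply/negPn/negP => hj; apply: hn; exists j; exact: hj.
have nc0 : ~ on c v0 by move/blkP => h; rewrite h in hc.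
pose imp x y := forall w, nonzero_pt w -> on x w -> on c w -> on y w.
case: (classic (exists a b, [/\ a \in B0, b \in B0, ~ imp a b & ~ imp b a]))
  => [[a [b [aB bB nab nba]]] | hno].
  have ab : a <> b by move=> e; apply: nab; rewrite e => w _.
  have [w1 [n1 [h1 [h2 h3]]]] : exists w, nonzero_pt w /\ on a w /\ on c w /\ ~ on b w.
    apply: NNPP => hn; apply: nab => w nw ha hcw; apply: NNPP => hb; apply: hn.
    by exists w.
  have [w2 [n2' [g1 [g2 g3]]]] : exists w, nonzero_pt w /\ on b w /\ on c w /\ ~ on a w.
    apply: NNPP => hn; apply: nba => w nw ha hcw; apply: NNPP => hb; apply: hn.
    by exists w.
  have bc : b <> c by move=> e; move: hc; rewrite -e bB.
  have ac : a <> c by move=> e; move: hc; rewrite -e aB.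
  apply: (cycle_of (v0 := v0) (w1 := w1) (w2 := w2) ab bc ac) => //;
    exact/blkP.
have tot a b : a \in B0 -> b \in B0 -> imp a b \/ imp b a.
  move=> aB bB; apply: NNPP => hn; apply: hno; exists a, b; split => //.
    by move=> h; apply: hn; left.
  by move=> h; apply: hn; right.
pose S m := [set y in B0 | pb (imp m y)].
have [m0 m0B] : exists m0, m0 \in B0.
  apply/set0Pn; rewrite -card_gt0 hv0; lia.
have [s [[m [mB hm]] smax]] : exists s, (exists m, m \in B0 /\ #|S m| = s) /\
    forall s', (exists m, m \in B0 /\ #|S m| = s') -> (s' <= s)%N.
  apply: (ex_max (N := k)); first by exists #|S m0|, m0.
  by move=> s' [m [_ <-]]; apply: leq_trans (max_card _) _; rewrite card_ord.
have allm y : y \in B0 -> imp m y.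
  move=> yB; apply: NNPP => nmy.
  have ymy : imp y m by case: (tot m y mB yB).
  have sub : S m \proper S y.
    apply/properP; split.
      apply/subsetP => z; rewrite !inE => /andP[zB /pbP hz]; rewrite zB /=.
      by apply/pbP => w nw hy hcw; apply: hz => //; apply: ymy.
    exists y; first by rewrite in_set yB /=; apply/pbP.
    by rewrite in_set yB /=; apply/negP => /pbP.
  have := proper_card sub; have := smax #|S y| (ex_intro _ y (conj yB erefl)).
  lia.
have [w [nw hmw hcw]] := meetF m c.
have sub : c |: B0 \subset blk w.
  apply/subsetP => z; rewrite in_setU1 => /orP[/eqP -> | zB]; apply/blkP => //.
  exact: allm.
have := subset_leq_card sub; rewrite cardsU1 hc hv0 /=.
have := hmax _ (ex_intro _ w (conj nw erefl)); move=> h1 h2; exfalso; have := leq_trans h2 h1; by rewrite add1n ltnn.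
Qed.

End Comb.

Theorem theorem5p1 (R : realType) (d k : nat) (F : 'I_k -> {mpoly R[i][3]}) :
  d_arrangement F d -> tk_zero F -> levi_has_induced_cycle F 6.
Proof. move=> hA hT; exact: (@main_gen (R[i] : numClosedFieldType) k d F hA hT). Qed.
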